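(* Let $G$ be a simple cubic graph and $(G',r)$ be constructed from $G$ as described in the context. A set $S\subseteq V(G')$ is a vector connectivity set for $(G',r)$ if and only if for every edge $e=xy$ of $G$, $S$ contains at least one vertex from each of the sets $X_e=\{x,w_{x,e},z_{x,e}\}$, $Z_e=\{z_{x,e},w_e,z_{y,e}\}$ and $Y_e=\{z_{y,e},w_{y,e},y\}$.
   Context: Construction of $G'$ from a cubic graph $G$: start with $G$. (1) For each edge $e=xy$ of $G$, delete $xy$, add three new vertices $w_{x,e},w_e,w_{y,e}$ and the edges $xw_{x,e}, w_{x,e}w_e, w_ew_{y,e}, w_{y,e}y$. (2) For each edge $e=xy$ of $G$, add two new vertices $z_{x,e},z_{y,e}$ and the edges $w_{x,e}z_{x,e}, z_{x,e}w_e, w_ez_{y,e}, z_{y,e}w_{y,e}$. (3) For every vertex $x$ of $G$ with incident edges $e,f,g$, add the edges $w_{x,e}w_{x,f}, w_{x,e}w_{x,g}, w_{x,f}w_{x,g}$. Requirements: for every edge $e=xy$ of $G$, $r(w_{x,e})=r(w_{y,e})=4$ and $r(w_e)=3$; $r(v')=0$ for all other vertices of $G'$. For $S\subseteq V(G')$ and $v\in V(G')\setminus S$, a $v$--$S$ fan of order $k$ is a collection of $k$ paths, each connecting $v$ to a vertex of $S$, pairwise vertex-disjoint except at $v$; $v$ is $k$-linked to $S$ if such a fan exists. A vector connectivity set for $(G',r)$ is a set $S$ such that every $v\in V(G')\setminus S$ is $r(v)$-linked to $S$. *)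

(* Defs.v *)
From mathcomp Require Import all_boot.
Set Implicit Arguments. Unset Strict Implicit. Unset Printing Implicit Defensive.

Definition simple_graph (V : finType) (e : rel V) : Prop :=
  irreflexive e /\ symmetric e.

Definition cubic (V : finType) (e : rel V) : Prop :=
  forall x : V, #|[set y | e x y]| = 3.

(* Raw vertex type of G':
     orig x      = the original vertex x of G
     wv x y      = w_{x,e}  for e = xy
     zv x y      = z_{x,e}  for e = xy
     we {x,y}    = w_e      for e = xy  (indexed by the unordered pair) *)
Definition Raw (V : finType) : finType := ((V + (V * V)) + ((V * V) + {set V}))%type.

Definition orig (V : finType) (x : V) : Raw V := inl (inl x).
Definition wv (V : finType) (x y : V) : Raw V := inl (inr (x, y)).
Definition zv (V : finType) (x y : V) : Raw V := inr (inl (x, y)).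
Definition we (V : finType) (x y : V) : Raw V := inr (inr [set x; y]).

Definition inG (V : finType) (e : rel V) (v : Raw V) : bool :=
  match v with
  | inl (inl _) => true
  | inl (inr (a, b)) => e a b
  | inr (inl (a, b)) => e a b
  | inr (inr s) => [exists a : V, exists b : V, e a b && (s == [set a; b])]
  end.

(* The edges of G' added in steps (1),(2),(3), listed in one orientation. *)
Definition base (V : finType) (e : rel V) (u v : Raw V) : bool :=
  match u, v with
  | inl (inl x), inl (inr (a, b)) => (x == a) && e a b
  | inl (inr (a, b)), inr (inr s) => e a b && (s == [set a; b])
  | inl (inr (a, b)), inr (inl (c, d)) => [&& e a b, a == c & b == d]
  | inr (inl (a, b)), inr (inr s) => e a b && (s == [set a; b])
  (* (3) triangle on w_{x,e}, w_{x,f}, w_{x,g} *)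
  | inl (inr (a, b)), inl (inr (c, d)) => [&& e a b, e c d, a == c & b != d]
  | _, _ => false
  end.

Definition adjR (V : finType) (e : rel V) : rel (Raw V) :=
  fun u v => base e u v || base e v u.

Definition adjG (V : finType) (e : rel V) : rel {v : Raw V | inG e v} :=
  fun u v => adjR e (val u) (val v).

Definition rR (V : finType) (v : Raw V) : nat :=
  match v with
  | inl (inr _) => 4
  | inr (inr _) => 3
  | _ => 0
  end.

(* A v--S fan of order k in a graph (T, adj): k paths, given as the sequences
   of vertices following v, each a (simple) path starting at v and ending in S,
   pairwise vertex-disjoint except at v. *)
Definition fan (T : finType) (adj : rel T) (S : {set T}) (v : T)
    (ps : seq (seq T)) : Prop :=
  (forall p, p \in ps -> [/\ path adj v p, uniq (v :: p) & last v p \in S]) /\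
  (forall i j, i < size ps -> j < size ps -> i != j ->
     [disjoint (nth [::] ps i) & (nth [::] ps j)]).

Definition linked (T : finType) (adj : rel T) (k : nat) (v : T) (S : {set T})
  : Prop :=
  exists ps : seq (seq T), size ps = k /\ fan adj S v ps.

Definition vector_connectivity_set (T : finType) (adj : rel T) (r : T -> nat)
    (S : {set T}) : Prop :=
  forall v, v \notin S -> linked adj (r v) v S.

Arguments adjG {V} e.
Arguments adjR {V} e.
Arguments base {V} e.
Arguments inG {V} e.

(* Main.v *)
Require Import Defs.
From mathcomp Require Import all_boot.
Set Implicit Arguments. Unset Strict Implicit.

Lemma path_hits (T : finType) (adj : rel T) (C N : {set T}) a p :
  a \in C -> path adj a p ->
  (forall u w, u \in C -> adj u w -> (w \in C) || (w \in N)) ->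
  last a p \notin C -> has (mem N) p.
Proof.
move=> + + Hcl; elim: p a => [|b p IH] a aC /=; first by rewrite aC.
case/andP=> ab pb lC.
have /orP[bC|bN] := Hcl _ _ aC ab; last by rewrite bN.
by rewrite (IH b bC pb lC) orbT.
Qed.

Lemma fan_bound (T : finType) (adj : rel T) (S : {set T}) v ps (C N : {set T}) :
  fan adj S v ps -> v \in C -> [disjoint C & S] ->
  (forall u w, u \in C -> adj u w -> (w \in C) || (w \in N)) ->
  size ps <= #|N|.
Proof.
move=> [Hp Hd] vC dCS Hcl.
have Hh : forall p, p \in ps -> has (mem N) p.
  move=> p /Hp [pp _ lS]; apply: (path_hits vC pp Hcl).
  by apply: contraTN lS => lC; rewrite (disjointFr dCS lC).
pose w (p : seq T) := odflt v [pick u in N | u \in p].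
have Hw : forall p, p \in ps -> (w p \in N) && (w p \in p).
  move=> p /Hh /hasP [u up uN]; rewrite /w.
  have uN' : u \in N := uN.
  case: pickP => [u' /andP[-> ->] //|/(_ u)]; by rewrite uN' up.
have Hu : uniq (map w ps).
  apply/(uniqP v) => i j; rewrite !inE size_map => ilt jlt.
  rewrite !(nth_map [::]) // => Heq; apply/eqP; apply/negPn/negP => ij; have := Hd i j ilt jlt ij.
  have /andP[_ wi] := Hw _ (mem_nth [::] ilt).
  have /andP[_ wj] := Hw _ (mem_nth [::] jlt).
  by move/disjointFr=> /(_ _ wi); rewrite Heq wj.
rewrite -(size_map w) -(card_uniqP Hu); apply: subset_leq_card; apply/subsetP => u.
by case/mapP=> p /Hw /andP[? _] ->.
Qed.

Ltac rawnorm := rewrite ?/orig ?/wv ?/zv ?/we; do ?(rewrite -!sum_eqE /=); rewrite ?xpair_eqE ?eqxx /=.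

Ltac dest := repeat match goal with
  | H : is_true (_ || _) |- _ => case/orP: H => H
  | H : is_true (_ && _) |- _ => let H' := fresh "H" in case/andP: H => H H'
  | H : is_true (_ == _) |- _ => move/eqP: H => H; subst
  | H : is_true false |- _ => discriminate H
  end.

Lemma set2_eq (V : finType) (a b c d : V) : a != b ->
  ([set a; b] == [set c; d]) = ((c == a) && (d == b)) || ((c == b) && (d == a)).
Proof.
move=> ab; apply/eqP/idP => [H|/orP[]/andP[/eqP-> /eqP->] //]; last by rewrite setUC.
have : a \in [set c; d] by rewrite -H set21.
have : b \in [set c; d] by rewrite -H set22.
rewrite !inE => /orP[]/eqP Hb /orP[]/eqP Ha; subst;
  rewrite ?eqxx ?orbT //= ?andbT ?(eq_sym a); by move: ab; rewrite eqxx.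
Qed.

Lemma closX (V : finType) (e : rel V) x y f g : irreflexive e -> symmetric e -> e x y ->
  (forall d, e x d -> [|| d == y, d == f | d == g]) ->
  forall a b, a \in [:: orig x; wv x y; zv x y] -> inG e b -> adjR e a b ->
  b \in [:: orig x; wv x y; zv x y] ++ [:: we x y; wv x f; wv x g].
Proof.
move=> irr sym exy Hn a b; rewrite !inE => /or3P[]/eqP->;
  case: b => [[z|[c d]]|[[c d]|s]] /= Hb; rewrite /adjR /=.
all: rawnorm.
all: move=> H; dest; rewrite ?eqxx ?orbT ?orbF //=; try by apply: Hn.
Qed.

Lemma closZ (V : finType) (e : rel V) x y : irreflexive e -> symmetric e -> e x y ->
  forall a b, a \in [:: we x y; zv x y; zv y x] -> inG e b -> adjR e a b ->
  b \in [:: we x y; zv x y; zv y x] ++ [:: wv x y; wv y x].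
Proof.
move=> irr sym exy.
have xy : x != y by apply: contraTneq exy => ->; rewrite irr.
move=> a b; rewrite !inE => /or3P[]/eqP->;
  case: b => [[z|[c d]]|[[c d]|s]] /= Hb; rewrite /adjR /=.
all: rawnorm.
all: rewrite ?(set2_eq _ _ xy) ?(set2_eq _ _ (negbT _)) ?[[set y; x]]setUC ?(set2_eq _ _ xy); try done.
all: move=> H; dest; rewrite ?eqxx ?orbT ?orbF //=.
Qed.

Lemma card_valset (V : finType) (e : rel V) (L : seq (Raw V)) :
  #|[set u : {v : Raw V | inG e v} | val u \in L]| <= size L.
Proof.
rewrite -(card_imset _ val_inj); apply: leq_trans (card_size L).
apply: subset_leq_card; apply/subsetP => r /imsetP [u]; rewrite inE => uL ->; exact: uL.
Qed.

Lemma other_nbrs (V : finType) (e : rel V) x y : cubic e -> e x y ->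
  exists f g, [/\ f != y, g != y, f != g, e x f & e x g] /\
     (forall d, e x d -> [|| d == y, d == f | d == g]).
Proof.
move=> Hc exy.
have : #|[set d | e x d] :\ y| == 2.
  have H := Hc x; rewrite (cardsD1 y) inE exy add1n in H.
  by case: H => ->.
case/cards2P => f [g [fg HA]].
have Hf : f \in [set d | e x d] :\ y by rewrite HA set21.
have Hg : g \in [set d | e x d] :\ y by rewrite HA set22.
move: Hf Hg; rewrite !inE => /andP[fy xf] /andP[gy xg].
exists f, g; split => // d xd.
case: (eqVneq d y) => //= dy.
have : d \in [set d | e x d] :\ y by rewrite !inE dy xd.
by rewrite HA !inE.
Qed.

Lemma forwardX (V : finType) (e : rel V) (Hsimple : simple_graph e) (Hcubic : cubic e)
  (S : {set {v : Raw V | inG e v}}) x y (exy : e x y) :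
  vector_connectivity_set (adjG e) (fun v => rR (val v)) S ->
  [exists v in S, val v \in [:: orig x; wv x y; zv x y]].
Proof.
case: Hsimple => irr sym VC.
apply: contraT => /negP Hno.
have [f [g [[fy gy fg xf xg] Hn]]] := other_nbrs Hcubic exy.
pose C := [set u : {v : Raw V | inG e v} | val u \in [:: orig x; wv x y; zv x y]].
pose N := [set u : {v : Raw V | inG e v} | val u \in [:: we x y; wv x f; wv x g]].
pose v0 : {v : Raw V | inG e v} := Sub (wv x y) exy.
have v0C : v0 \in C by rewrite inE /= !inE eqxx orbT.
have dCS : [disjoint C & S].
  apply/pred0P => u /=; apply/negbTE/negP => /andP[uC uS]; apply: Hno.
  by apply/existsP; exists u; rewrite uS; rewrite inE in uC.
have v0S : v0 \notin S by apply: contraTN v0C => v0S; rewrite (disjointFl dCS v0S).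
have [ps [sz Hf]] := VC v0 v0S.
have H := fan_bound Hf v0C dCS (N := N).
have : size ps <= #|N|.
  apply: H => u w; rewrite /adjG [u \in C]inE => uC uw.
  by rewrite [w \in C]inE [w \in N]inE -mem_cat; apply: (closX irr sym exy Hn uC (valP w) uw).
by rewrite sz /= => /leq_trans /(_ (card_valset e _)).
Qed.

Lemma forwardZ (V : finType) (e : rel V) (Hsimple : simple_graph e)
  (S : {set {v : Raw V | inG e v}}) x y (exy : e x y) :
  vector_connectivity_set (adjG e) (fun v => rR (val v)) S ->
  [exists v in S, val v \in [:: zv x y; we x y; zv y x]].
Proof.
case: Hsimple => irr sym VC.
apply: contraT => /negP Hno.
pose C := [set u : {v : Raw V | inG e v} | val u \in [:: we x y; zv x y; zv y x]].
pose N := [set u : {v : Raw V | inG e v} | val u \in [:: wv x y; wv y x]].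
have inv0 : inG e (we x y) by apply/existsP; exists x; apply/existsP; exists y; rewrite exy eqxx.
pose v0 : {v : Raw V | inG e v} := Sub (we x y) inv0.
have v0C : v0 \in C by rewrite inE /= !inE eqxx.
have dCS : [disjoint C & S].
  apply/pred0P => u /=; apply/negbTE/negP => /andP[uC uS]; apply: Hno.
  apply/existsP; exists u; rewrite uS; rewrite !inE in uC *.
  by case/or3P: uC => ->; rewrite ?orbT.
have v0S : v0 \notin S by apply: contraTN v0C => v0S; rewrite (disjointFl dCS v0S).
have [ps [sz Hf]] := VC v0 v0S.
have H := fan_bound Hf v0C dCS (N := N).
have : size ps <= #|N|.
  apply: H => u w; rewrite /adjG [u \in C]inE => uC uw.
  by rewrite [w \in C]inE [w \in N]inE -mem_cat; apply: (closZ irr sym exy uC (valP w) uw).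
by rewrite sz /= => /leq_trans /(_ (card_valset e _)).
Qed.


Ltac usefacts e := repeat match goal with
  | H : (_ == _) = false |- _ => rewrite H
  | H : is_true (e _ _) |- _ => rewrite H
  end.

Ltac crunch e := rewrite ?/adjR /=; rewrite ?inE; rawnorm; usefacts e; rewrite ?eqxx /= ?orbT ?andbT ?orbF; try done.

Definition SR (V : finType) (e : rel V) (S : {set {v : Raw V | inG e v}}) (r : Raw V) : bool :=
  [exists u in S, val u == r].

Lemma inG_we (V : finType) (e : rel V) a b : e a b -> inG e (we a b).
Proof. by move=> ab; apply/existsP; exists a; apply/existsP; exists b; rewrite ab eqxx. Qed.

Lemma mid_from (V : finType) (e : rel V) (S : {set {v : Raw V | inG e v}}) x f : symmetric e -> e x f ->
  has (SR S) [:: zv x f; we x f; zv f x] ->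
  exists q, [/\ path (adjR e) (wv x f) q, uniq q, SR S (last (wv x f) q), all (inG e) q
               & all (mem [:: zv x f; we x f; zv f x]) q].
Proof.
move=> sym xf; have fx : e f x by rewrite sym.
have wG := inG_we xf; simpl in wG.
case/hasP => r; rewrite !inE => /or3P[]/eqP-> Sr.
- exists [:: zv x f]; split => //=; crunch e.
- exists [:: we x f]; split => //=; crunch e; rewrite ?wG //.
- exists [:: we x f; zv f x]; split => //=; crunch e; rewrite ?wG ?[[set f; x]]setUC ?eqxx //.
Qed.

Lemma y_from (V : finType) (e : rel V) (S : {set {v : Raw V | inG e v}}) x y : symmetric e -> e x y ->
  has (SR S) [:: zv y x; wv y x; orig y] ->
  exists q, [/\ path (adjR e) (we x y) q, uniq q, SR S (last (we x y) q), all (inG e) q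
               & all (mem [:: zv y x; wv y x; orig y]) q].
Proof.
move=> sym xy; have yx : e y x by rewrite sym.
case/hasP => r; rewrite !inE => /or3P[]/eqP-> Sr.
- exists [:: zv y x]; split => //=; crunch e; rewrite [[set y; x]]setUC eqxx //.
- exists [:: wv y x]; split => //=; crunch e; rewrite [[set y; x]]setUC eqxx //.
- exists [:: wv y x; orig y]; split => //=; crunch e; rewrite [[set y; x]]setUC eqxx //.
Qed.

Definition good (V : finType) (e : rel V) (S : {set {v : Raw V | inG e v}})
  (v : {v : Raw V | inG e v}) (p : seq (Raw V)) : Prop :=
  [/\ path (adjR e) (val v) p, uniq (val v :: p), SR S (last (val v) p) & all (inG e) p].

Lemma lift_linked (V : finType) (e : rel V) (S : {set {v : Raw V | inG e v}})
  (v : {v : Raw V | inG e v}) (ps : seq (seq (Raw V))) :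
  (forall p, p \in ps -> good S v p) ->
  (forall i j, i < size ps -> j < size ps -> i != j -> [disjoint nth [::] ps i & nth [::] ps j]) ->
  linked (adjG e) (size ps) v S.
Proof.
move=> Hg Hd.
pose lf (r : Raw V) := insubd v r.
have vK : forall p, all (inG e) p -> map val (map lf p) = p.
  move=> p ap; rewrite -map_comp; apply: map_id_in => r rp /=.
  by rewrite /lf insubdK //; move/allP: ap; apply.
exists (map (map lf) ps); split; first by rewrite size_map.
split.
- move=> p' /mapP [p pin ->]; have [pp up Sl ag] := Hg p pin.
  split.
  + have -> : adjG e = relpre val (adjR e) by [].
    by rewrite -(@path_map _ _ val) vK.
  + by rewrite -(map_inj_uniq val_inj) /= vK.
  + rewrite -{1}(valKd v v) (last_map lf) -/(lf _).
    case/existsP: Sl => u /andP [uS /eqP <-]; by rewrite /lf valKd.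
- move=> i j; rewrite size_map => ilt jlt ij; rewrite !(nth_map [::]) //.
  have Hij := Hd i j ilt jlt ij.
  have [_ _ _ ai] := Hg _ (mem_nth [::] ilt).
  have [_ _ _ aj] := Hg _ (mem_nth [::] jlt).
  rewrite disjoint_has; apply/hasP => -[u ui uj].
  have ui' : val u \in nth [::] ps i by rewrite -(vK _ ai); apply: map_f.
  have uj' : val u \in nth [::] ps j by rewrite -(vK _ aj); apply: map_f.
  by rewrite (disjointFr Hij ui') in uj'.
Qed.

Lemma link4 (V : finType) (e : rel V) (S : {set {v : Raw V | inG e v}})
  (v : {v : Raw V | inG e v}) p1 p2 p3 p4 :
  good S v p1 -> good S v p2 -> good S v p3 -> good S v p4 ->
  [disjoint p1 & p2] -> [disjoint p1 & p3] -> [disjoint p1 & p4] ->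
  [disjoint p2 & p3] -> [disjoint p2 & p4] -> [disjoint p3 & p4] ->
  linked (adjG e) 4 v S.
Proof.
move=> g1 g2 g3 g4 d12 d13 d14 d23 d24 d34.
apply: (lift_linked (ps := [:: p1; p2; p3; p4])).
- by move=> p; rewrite !inE => /or4P[]/eqP->.
- case=> [|[|[|[|i]]]] [|[|[|[|j]]]] //= _ _ _; by rewrite // disjoint_sym.
Qed.

Lemma link3 (V : finType) (e : rel V) (S : {set {v : Raw V | inG e v}})
  (v : {v : Raw V | inG e v}) p1 p2 p3 :
  good S v p1 -> good S v p2 -> good S v p3 ->
  [disjoint p1 & p2] -> [disjoint p1 & p3] -> [disjoint p2 & p3] ->
  linked (adjG e) 3 v S.
Proof.
move=> g1 g2 g3 d12 d13 d23.
apply: (lift_linked (ps := [:: p1; p2; p3])).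
- by move=> p; rewrite !inE => /or3P[]/eqP->.
- case=> [|[|[|i]]] [|[|[|j]]] //= _ _ _; by rewrite // disjoint_sym.
Qed.

Lemma disj_reg (T : finType) (p q L1 L2 : seq T) :
  all (mem L1) p -> all (mem L2) q -> ~~ has (mem L2) L1 -> [disjoint p & q].
Proof.
move=> /allP a1 /allP a2 nh; rewrite disjoint_has; apply/hasP => -[r rq rp].
by move/hasP: nh; apply; exists r; [apply: a1 | apply: a2].
Qed.

Lemma notin_reg (T : eqType) (q L : seq T) a : all (mem L) q -> a \notin L -> a \notin q.
Proof. by move=> /allP aq; apply: contra => /aq. Qed.

Lemma good_seq (V : finType) (e : rel V) (S : {set {v : Raw V | inG e v}})
  (v : {v : Raw V | inG e v}) (q L : seq (Raw V)) :
  path (adjR e) (val v) q -> uniq q -> SR S (last (val v) q) -> all (inG e) q ->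
  all (mem L) q -> val v \notin L -> good S v q.
Proof. by move=> pq uq Sq aq rq vL; split => //=; rewrite uq (notin_reg rq vL). Qed.

Lemma reg_cons (T : eqType) (a : T) q L : all (mem L) q -> all (mem (a :: L)) (a :: q).
Proof. by move=> /allP rq /=; rewrite mem_head /=; apply/allP => r /rq rL; rewrite inE; apply/orP; right; exact: rL. Qed.

Lemma good_cons (V : finType) (e : rel V) (S : {set {v : Raw V | inG e v}})
  (v : {v : Raw V | inG e v}) a (q L : seq (Raw V)) :
  adjR e (val v) a -> path (adjR e) a q -> uniq q -> SR S (last a q) -> inG e a -> all (inG e) q ->
  all (mem L) q -> val v \notin a :: L -> a \notin L -> good S v (a :: q).
Proof.
move=> va pq uq Sq ia aq rq vL aL.
have vq := notin_reg (reg_cons a rq) vL.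
by split => //=; rewrite ?va ?pq ?ia ?aq ?uq ?(notin_reg rq aL) ?vq.
Qed.


Lemma neq_facts (V : finType) (a b : V) : a != b -> (a == b) = false /\ (b == a) = false.
Proof. by move=> ab; rewrite (negbTE ab) eq_sym (negbTE ab). Qed.

Lemma set_fact (V : finType) (x d d' : V) : x != d -> x != d' -> d != d' ->
  ([set x; d] == [set x; d']) = false.
Proof. by move=> xd xd' dd'; rewrite set2_eq // eqxx /= [d' == d]eq_sym (negbTE dd') (negbTE xd). Qed.

Lemma wv_case (V : finType) (e : rel V) (irr : irreflexive e) (sym : symmetric e) (Hc : cubic e)
  (S : {set {v : Raw V | inG e v}})
  (H : forall a b, e a b -> [/\ has (SR S) [:: orig a; wv a b; zv a b],
                                has (SR S) [:: zv a b; we a b; zv b a] &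
                                has (SR S) [:: zv b a; wv b a; orig b]])
  (v : {v : Raw V | inG e v}) x y :
  val v = wv x y -> e x y -> ~~ SR S (wv x y) -> linked (adjG e) 4 v S.
Proof.
move=> vE xy nS.
have [f [g [[fy gy fg xf xg] Hn]]] := other_nbrs Hc xy.
have neqx : forall d, e x d -> x != d by move=> d xd; apply: contraTneq xd => <-; rewrite irr.
have [F1 F2] := neq_facts (neqx _ xy).
have [F3 F4] := neq_facts (neqx _ xf).
have [F5 F6] := neq_facts (neqx _ xg).
have [F7 F8] := neq_facts fy.
have [F9 F10] := neq_facts gy.
have [F11 F12] := neq_facts fg.
have G1 := set_fact (neqx _ xy) (neqx _ xf) (negbT F8).
have G2 := set_fact (neqx _ xf) (neqx _ xy) (negbT F7).
have G3 := set_fact (neqx _ xy) (neqx _ xg) (negbT F10).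
have G4 := set_fact (neqx _ xg) (neqx _ xy) (negbT F9).
have G5 := set_fact (neqx _ xf) (neqx _ xg) (negbT F11).
have G6 := set_fact (neqx _ xg) (neqx _ xf) (negbT F12).
have fx : e f x by rewrite sym.
have gx : e g x by rewrite sym.
have yx : e y x by rewrite sym.
have [qf [pf uf Sf af rf]] := mid_from sym xf (let: And3 _ h _ := H x f xf in h).
have [qg [pg ug Sg ag rg]] := mid_from sym xg (let: And3 _ h _ := H x g xg in h).
have gf : good S v (wv x f :: qf).
  apply: good_cons rf _ _ => //; rewrite ?vE; crunch e.
have gg : good S v (wv x g :: qg).
  apply: good_cons rg _ _ => //; rewrite ?vE; crunch e.
have rf' := reg_cons (wv x f) rf.
have rg' := reg_cons (wv x g) rg.
have dfg : [disjoint wv x f :: qf & wv x g :: qg].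
  apply: disj_reg rf' rg' _; crunch e.
case: (boolP (SR S (orig x))) => Sx.
- have [qe [pe ue Se ae re]] := mid_from sym xy (let: And3 _ h _ := H x y xy in h).
  have ge : good S v qe by apply: good_seq re _ => //; rewrite ?vE; crunch e.
  have g4 : good S v [:: orig x] by split; rewrite ?vE /=; crunch e.
  have r4 : all (mem [:: orig x]) [:: orig x] by rewrite /= mem_head.
  apply: (link4 gf gg ge g4 dfg).
  all: try (apply: disj_reg rf' re _; crunch e).
  all: try (apply: disj_reg rf' r4 _; crunch e).
  all: try (apply: disj_reg rg' re _; crunch e).
  all: try (apply: disj_reg rg' r4 _; crunch e).
  all: try (apply: disj_reg re r4 _; crunch e).
- have Szx : SR S (zv x y).
    case: (H x y xy) => /hasP [r]; rewrite !inE => /or3P[]/eqP -> //.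
    by rewrite (negbTE Sx).
    by rewrite (negbTE nS).
  have [q [pq uq Sq aq rq]] := y_from sym xy (let: And3 _ _ h := H x y xy in h).
  have ge : good S v (we x y :: q).
    apply: good_cons rq _ _ => //; rewrite ?vE; try crunch e.
    exact: inG_we.
  have re := reg_cons (we x y) rq.
  have g4 : good S v [:: zv x y] by split; rewrite ?vE /=; crunch e.
  have r4 : all (mem [:: zv x y]) [:: zv x y] by rewrite /= mem_head.
  apply: (link4 gf gg ge g4 dfg).
  all: try (apply: disj_reg rf' re _; crunch e).
  all: try (apply: disj_reg rf' r4 _; crunch e).
  all: try (apply: disj_reg rg' re _; crunch e).
  all: try (apply: disj_reg rg' r4 _; crunch e).
  all: try (apply: disj_reg re r4 _; crunch e).
Qed.

Lemma we_case (V : finType) (e : rel V) (irr : irreflexive e) (sym : symmetric e) (Hc : cubic e)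
  (S : {set {v : Raw V | inG e v}})
  (H : forall a b, e a b -> [/\ has (SR S) [:: orig a; wv a b; zv a b],
                                has (SR S) [:: zv a b; we a b; zv b a] &
                                has (SR S) [:: zv b a; wv b a; orig b]])
  (v : {v : Raw V | inG e v}) a b :
  val v = we a b -> e a b -> SR S (zv a b) -> linked (adjG e) 3 v S.
Proof.
move=> vE ab Sz.
have [f [g [[fb gb fg af ag] Hn]]] := other_nbrs Hc ab.
have neqx : forall x d, e x d -> x != d by move=> x d xd; apply: contraTneq xd => <-; rewrite irr.
have [F1 F2] := neq_facts (neqx _ _ ab).
have [F3 F4] := neq_facts (neqx _ _ af).
have [F7 F8] := neq_facts fb.
have ba : e b a by rewrite sym.
have fa : e f a by rewrite sym.
have [r [pr ur Sr ar rr]] : exists r, [/\ path (adjR e) (wv a b) r, uniq r,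
     SR S (last (wv a b) r), all (inG e) r & all (mem [:: orig a; wv a f; zv a f]) r].
  case: (boolP (SR S (orig a))) => Sa.
    by exists [:: orig a]; split => //=; crunch e.
  case: (H a f af) => /hasP [r']; rewrite !inE => /or3P[]/eqP -> Sr' _ _.
  - by rewrite Sr' in Sa.
  - by exists [:: wv a f]; split => //=; crunch e.
  - by exists [:: wv a f; zv a f]; split => //=; crunch e.
have [q [pq uq Sq aq rq]] := y_from sym ab (let: And3 _ _ h := H a b ab in h).
have g1 : good S v [:: zv a b] by split; rewrite ?vE /=; crunch e.
have r1 : all (mem [:: zv a b]) [:: zv a b] by rewrite /= mem_head.
have g2 : good S v (wv a b :: r).
  apply: good_cons rr _ _ => //; rewrite ?vE; crunch e.
have r2 := reg_cons (wv a b) rr.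
have g3 : good S v q by apply: good_seq rq _ => //; rewrite ?vE; crunch e.
apply: (link3 g1 g2 g3).
all: try (apply: disj_reg r1 r2 _; crunch e).
all: try (apply: disj_reg r1 rq _; crunch e).
all: try (apply: disj_reg r2 rq _; crunch e).
Qed.

Lemma ex_has (V : finType) (e : rel V) (S : {set {v : Raw V | inG e v}}) (L : seq (Raw V)) :
  [exists v in S, val v \in L] -> has (SR S) L.
Proof.
case/existsP => u /andP [uS uL]; apply/hasP; exists (val u) => //.
by apply/existsP; exists u; rewrite uS eqxx.
Qed.

Unset Implicit Arguments.

Theorem mainTheorem4 (V : finType) (e : rel V)
  (Hsimple : simple_graph e) (Hcubic : cubic e)
  (S : {set {v : Raw V | inG e v}}) :
  vector_connectivity_set (adjG e) (fun v => rR (val v)) S <->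
  (forall x y : V, e x y ->
     [/\ [exists v in S, val v \in [:: orig x; wv x y; zv x y]],
         [exists v in S, val v \in [:: zv x y; we x y; zv y x]] &
         [exists v in S, val v \in [:: zv y x; wv y x; orig y]]]).
Proof.
have [irr sym] := Hsimple.
split.
- move=> VC x y xy; split.
  + exact: forwardX.
  + exact: forwardZ.
  + have yx : e y x by rewrite sym.
    case/existsP: (forwardX Hsimple Hcubic yx VC) => u /andP [uS uL].
    apply/existsP; exists u; rewrite uS /=; move: uL; rewrite !inE.
    by case/or3P => ->; rewrite ?orbT.
- move=> Hyp.
  have H : forall a b, e a b -> [/\ has (SR S) [:: orig a; wv a b; zv a b],
                                has (SR S) [:: zv a b; we a b; zv b a] &
                                has (SR S) [:: zv b a; wv b a; orig b]].
    by move=> a b ab; case: (Hyp a b ab) => h1 h2 h3; split; apply: ex_has.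
  move=> v vS.
  have nS : ~~ SR S (val v).
    apply/negP => /existsP [u /andP [uS /eqP /val_inj uv]]; by rewrite -uv uS in vS.
  have lin0 : linked (adjG e) 0 v S.
    by exists [::]; split => //; split => // i j.
  have Hr := valP v.
  case E: (val v) Hr nS => [[z|[a b]]|[[a b]|s]] Hr nS //=.
  + exact: (wv_case irr sym Hcubic H E Hr).
  + case/existsP: Hr => a /existsP [b /andP [ab /eqP sE]]; subst s.
    have ba : e b a by rewrite sym.
    case: (H a b ab) => _ /hasP [r]; rewrite !inE => /or3P[]/eqP -> Sr _.
    * exact: (we_case irr sym Hcubic H E ab Sr).
    * by rewrite Sr in nS.
    * apply: (we_case irr sym Hcubic H (a := b) (b := a)) => //.
      by rewrite E /we setUC.
Qed.
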